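(* Let $\xi\in C^2(\mathbb S^1;\mathbb R^d)$ and $\sigma\in C^1(\mathbb S^1;\mathbb R)$ satisfy $\partial_s(\sigma\partial_s\xi)+\xi=0$ and $|\partial_s\xi|=1$ on $\mathbb S^1$. Let $\tau:=\sigma^2$ and $\bar\tau:=\int_0^1\tau^{1/2}\,ds$. Then $\tau$ satisfies the first integral $$\tfrac12(\partial_s\tau)^2+V(\tau)=\lambda,\qquad V(\tau):=4\tau^{3/2}-6\bar\tau\,\tau,$$ where $\lambda=V(\tau_e)$ for any extreme value $\tau_e$ of $\tau$. Moreover $\lambda\in[-2\bar\tau^3,0)$.
   Context: $\mathbb S^1=\mathbb R/\mathbb Z$, $d\ge2$. *)

(* Defs.v *)
(* Functions on S^1 = R/Z are 1-periodic functions R -> R. *)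
From Stdlib Require Import Reals Lra.
From Coquelicot Require Import Coquelicot.
Open Scope R_scope.

Definition periodic1 (f : R -> R) : Prop := forall s, f (s + 1) = f s.

Definition isC1 (f : R -> R) : Prop :=
  (forall s, ex_derive f s) /\ (forall s, continuous (Derive f) s).
Definition isC2 (f : R -> R) : Prop :=
  (forall s, ex_derive f s) /\ (forall s, ex_derive (Derive f) s) /\
  (forall s, continuous (Derive (Derive f)) s).

(* Euclidean norm in R^d of the vector with components v 0, ..., v (d-1) *)
Definition eucl_norm (d : nat) (v : nat -> R) : R :=
  sqrt (sum_f_R0 (fun i => v i ^ 2) (pred d)).

Definition pow3half (t : R) : R := t * sqrt t.

Definition Vpot (taubar t : R) : R := 4 * pow3half t - 6 * taubar * t.

Definition local_extremum (f : R -> R) (s0 : R) : Prop :=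
  exists eps, 0 < eps /\
    ((forall t, Rabs (t - s0) < eps -> f t <= f s0) \/
     (forall t, Rabs (t - s0) < eps -> f s0 <= f t)).

(* Main.v *)
Require Import Defs.
From Stdlib Require Import Reals Lra Lia Classical.
From Coquelicot Require Import Coquelicot.
Open Scope R_scope.

Lemma D_eq {f : R -> R} {x a : R} b : is_derive f x a -> a = b -> is_derive f x b.
Proof. intros H ->; exact H. Qed.

Lemma D_plus {f g : R -> R} {x a b : R} : is_derive f x a -> is_derive g x b ->
  is_derive (fun t => f t + g t) x (a + b).
Proof. intros Ha Hb. exact (is_derive_plus f g x a b Ha Hb). Qed.

Lemma D_minus {f g : R -> R} {x a b : R} : is_derive f x a -> is_derive g x b ->
  is_derive (fun t => f t - g t) x (a - b).
Proof. intros Ha Hb. exact (is_derive_minus f g x a b Ha Hb). Qed.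

Lemma D_mult {f g : R -> R} {x a b : R} : is_derive f x a -> is_derive g x b ->
  is_derive (fun t => f t * g t) x (a * g x + f x * b).
Proof. intros Ha Hb. apply (is_derive_mult f g x a b Ha Hb). intros; apply Rmult_comm. Qed.

Lemma D_scal {f : R -> R} {x a : R} k : is_derive f x a ->
  is_derive (fun t => k * f t) x (k * a).
Proof. intros Ha. exact (is_derive_scal f x k a Ha). Qed.

Lemma D_sq {f : R -> R} {x a : R} : is_derive f x a ->
  is_derive (fun t => f t ^ 2) x (2 * f x * a).
Proof.
  intros Ha. apply (is_derive_ext (fun t => f t * f t) (fun t => f t ^ 2)). intros; simpl; ring.
  eapply D_eq. apply (D_mult Ha Ha). ring.
Qed.

Lemma D_id x : is_derive (fun t : R => t) x 1.
Proof. exact (is_derive_id x). Qed.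

Lemma D_cont {f : R -> R} {x a : R} : is_derive f x a -> continuity_pt f x.
Proof. intros H. apply derivable_continuous_pt. exists a. now apply is_derive_Reals. Qed.

Lemma sum_lin n (u v w : nat -> R) x y :
  (forall i, (i <= n)%nat -> u i = x * v i + y * w i) ->
  sum_f_R0 u n = x * sum_f_R0 v n + y * sum_f_R0 w n.
Proof.
  induction n; intros H; simpl.
  - apply H; lia.
  - rewrite IHn by (intros; apply H; lia). rewrite (H (S n)) by lia. ring.
Qed.

Lemma sum_nonneg n (u : nat -> R) : (forall i, 0 <= u i) -> 0 <= sum_f_R0 u n.
Proof.
  intros H; induction n; simpl. apply H. specialize (H (S n)); lra.
Qed.

Lemma sum_derive n (f : nat -> R -> R) (df : nat -> R) s :
  (forall i, (i <= n)%nat -> is_derive (f i) s (df i)) ->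
  is_derive (fun t => sum_f_R0 (fun i => f i t) n) s (sum_f_R0 df n).
Proof.
  induction n; intros H; simpl.
  - apply H; lia.
  - apply D_plus. apply IHn; intros; apply H; lia. apply H; lia.
Qed.

Lemma deriv_const (f : R -> R) : (forall s, is_derive f s 0) -> forall s, f s = f 0.
Proof.
  intros H s.
  destruct (MVT_gen f 0 s (fun _ => 0)) as [c [_ Hc]].
  - intros; apply H.
  - intros; apply (D_cont (H x)).
  - lra.
Qed.

Lemma no_increase (G g : R -> R) : periodic1 G -> (forall s, is_derive G s (g s)) ->
  (forall s, 1 <= g s) -> False.
Proof.
  intros Hp H Hg.
  destruct (MVT_gen G 0 1 g) as [c [_ Hc]].
  - intros; apply H.
  - intros; apply (D_cont (H x)).
  - specialize (Hp 0). rewrite Rplus_0_l in Hp. rewrite Hp in Hc.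
    specialize (Hg c). nra.
Qed.

Lemma periodic_derive (f : R -> R) : periodic1 f -> (forall s, ex_derive f s) ->
  periodic1 (Derive f).
Proof.
  intros Hp Hd s.
  assert (H1 := Derive_correct f (s + 1) (Hd (s+1))).
  assert (Hg : is_derive (fun t => t + 1) s 1).
  { eapply D_eq. apply (D_plus (D_id s) (is_derive_const (1:R) s)). unfold zero; simpl; ring. }
  assert (H2 : is_derive (fun t => f (t + 1)) s (Derive f (s+1))).
  { eapply D_eq. apply (is_derive_comp f (fun t => t + 1) s _ 1 H1 Hg).
    unfold scal; simpl; unfold mult; simpl. ring. }
  symmetry. apply is_derive_unique.
  apply (is_derive_ext (fun t => f (t + 1))). intros; apply Hp. exact H2.
Qed.

Theorem proposition3p9 (d : nat) (xi : nat -> R -> R) (sg : R -> R)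
  (hd : (2 <= d)%nat)
  (hxi_per : forall i, (i < d)%nat -> periodic1 (xi i))
  (hxi_C2 : forall i, (i < d)%nat -> isC2 (xi i))
  (hsg_per : periodic1 sg)
  (hsg_C1 : isC1 sg)
  (heq : forall i s, (i < d)%nat ->
     Derive (fun t => sg t * Derive (xi i) t) s + xi i s = 0)
  (hunit : forall s, eucl_norm d (fun i => Derive (xi i) s) = 1) :
  let tau := fun s => sg s ^ 2 in
  let taubar := RInt (fun s => sqrt (tau s)) 0 1 in
  exists lambda : R,
    (forall s, / 2 * (Derive tau s) ^ 2 + Vpot taubar (tau s) = lambda) /\
    (forall s0, local_extremum tau s0 -> lambda = Vpot taubar (tau s0)) /\
    - 2 * taubar ^ 3 <= lambda /\ lambda < 0.
Proof.
  intros tau taubar.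
  set (n := pred d).
  assert (hi : forall i, (i <= n)%nat -> (i < d)%nat) by (intros; unfold n; lia).
  set (x1 := fun i => Derive (xi i)).
  set (x2 := fun i => Derive (x1 i)).
  set (sp := Derive sg).
  assert (Hx1 : forall i s, (i <= n)%nat -> is_derive (xi i) s (x1 i s)).
  { intros i s Hi. apply Derive_correct. apply (hxi_C2 i (hi i Hi)). }
  assert (Hx2 : forall i s, (i <= n)%nat -> is_derive (x1 i) s (x2 i s)).
  { intros i s Hi. apply Derive_correct. apply (hxi_C2 i (hi i Hi)). }
  assert (Hs : forall s, is_derive sg s (sp s)).
  { intros s. apply Derive_correct. apply hsg_C1. }
  assert (Heq' : forall i s, (i <= n)%nat -> xi i s = - (sp s * x1 i s + sg s * x2 i s)).
  { intros i s Hi. assert (H := heq i s (hi i Hi)).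
    rewrite Derive_mult in H. unfold sp, x2, x1. lra.
    apply hsg_C1. apply (hxi_C2 i (hi i Hi)). }
  assert (Hper1 : forall i, (i <= n)%nat -> periodic1 (x1 i)).
  { intros i Hi. apply periodic_derive. apply hxi_per, hi, Hi. apply (hxi_C2 i (hi i Hi)). }
  set (A := fun s => sum_f_R0 (fun i => x1 i s ^ 2) n).
  assert (HA : forall s, A s = 1).
  { intros s. assert (H := hunit s). unfold eucl_norm in H. fold n in H.
    assert (H0 : 0 <= A s) by (apply sum_nonneg; intros; apply pow2_ge_0).
    rewrite <- (sqrt_sqrt (A s) H0). unfold A, x1. rewrite H. ring. }
  set (B := fun s => sum_f_R0 (fun i => x1 i s * x2 i s) n).
  assert (HB : forall s, B s = 0).
  { intros s.
    assert (H1 : is_derive A s (2 * B s)).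
    { eapply D_eq. apply (sum_derive n (fun i t => x1 i t ^ 2)).
      intros i Hi. apply (D_sq (Hx2 i s Hi)).
      unfold B. rewrite (sum_lin n _ (fun i => x1 i s * x2 i s) (fun _ => 0) 2 0). ring.
      intros; ring. }
    assert (H2 : is_derive A s 0).
    { apply (is_derive_ext (fun _ => 1)). intros; symmetry; apply HA.
      apply (is_derive_const (1:R) s). }
    apply is_derive_unique in H1. apply is_derive_unique in H2. lra. }
  set (G := fun s => sum_f_R0 (fun i => xi i s * x1 i s) n).
  set (F := fun s => sum_f_R0 (fun i => xi i s ^ 2) n).
  set (P := fun s => sum_f_R0 (fun i => x2 i s ^ 2) n).
  set (D := fun s => sum_f_R0 (fun i => xi i s * x2 i s) n).
  assert (HP : forall s, 0 <= P s) by (intros; apply sum_nonneg; intros; apply pow2_ge_0).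
  assert (Ha : forall s, sp s = - G s).
  { intros s. assert (H : G s = (- sp s) * A s + (- sg s) * B s).
    { unfold G, A, B. apply sum_lin.
      intros i Hi. rewrite (Heq' i s Hi). ring. }
    rewrite H, HA, HB. ring. }
  assert (Hb : forall s, D s = - sg s * P s).
  { intros s. assert (H : D s = (- sp s) * B s + (- sg s) * P s).
    { unfold D, P, B. apply sum_lin.
      intros i Hi. rewrite (Heq' i s Hi). ring. }
    rewrite H, HB. ring. }
  assert (Hc : forall s, F s = G s ^ 2 + sg s ^ 2 * P s).
  { intros s. assert (H : F s = (- sp s) * G s + (- sg s) * D s).
    { unfold F, G, D. apply sum_lin.
      intros i Hi. cbv beta. transitivity (xi i s * xi i s). ring. rewrite (Heq' i s Hi) at 1. ring. }
    rewrite H, Hb, Ha. ring. }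
  assert (HdG : forall s, is_derive G s (1 + D s)).
  { intros s. eapply D_eq. apply (sum_derive n (fun i t => xi i t * x1 i t)).
    intros i Hi. apply (D_mult (Hx1 i s Hi) (Hx2 i s Hi)).
    rewrite <- (HA s). transitivity (1 * A s + 1 * D s); [|ring].
    unfold A, D. apply sum_lin. intros; cbv beta; ring. }
  assert (HdF : forall s, is_derive F s (2 * G s)).
  { intros s. eapply D_eq. apply (sum_derive n (fun i t => xi i t ^ 2)).
    intros i Hi. apply (D_sq (Hx1 i s Hi)).
    unfold G. rewrite (sum_lin n _ (fun i => xi i s * x1 i s) (fun _ => 0) 2 0). ring.
    intros; ring. }
  assert (HGper : periodic1 G).
  { intros s. unfold G. apply sum_eq. intros i Hi.
    rewrite (hxi_per i (hi i Hi)), (Hper1 i Hi). reflexivity. }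
  set (K := fun s => 2 * F s + 4 * sg s).
  assert (HK : forall s, K s = K 0).
  { apply deriv_const. intros s. eapply D_eq.
    apply (D_plus (D_scal 2 (HdF s)) (D_scal 4 (Hs s))). rewrite Ha. ring. }
  set (k := K 0).
  assert (Hk : forall s, 2 * F s + 4 * sg s = k) by (intros; apply HK).
  set (E := fun t => 2 * ((sg t * sg t) * (G t * G t)) + 4 * ((sg t * sg t) * sg t)
                     - k * (sg t * sg t)).
  assert (HE : forall s, E s = E 0).
  { apply deriv_const. intros s. eapply D_eq.
    apply (D_minus (D_plus (D_scal 2 (D_mult (D_mult (Hs s) (Hs s)) (D_mult (HdG s) (HdG s))))
       (D_scal 4 (D_mult (D_mult (Hs s) (Hs s)) (Hs s)))) (D_scal k (D_mult (Hs s) (Hs s)))).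
    rewrite Ha, Hb, <- (Hk s), Hc. ring. }
  set (lam := E 0).
  assert (HEpt : forall s, lam = -2 * sg s ^ 4 * P s).
  { intros s. unfold lam. rewrite <- (HE s). unfold E. rewrite <- (Hk s), Hc. ring. }
  assert (Hlam0 : lam <> 0).
  { intros H0. apply (no_increase G (fun s => 1 + D s) HGper HdG).
    intros s. rewrite Hb. assert (H := HEpt s). rewrite H0 in H.
    destruct (Req_dec (sg s) 0) as [Z|Z].
    - rewrite Z. lra.
    - assert (P s = 0).
      { assert (H4 : sg s ^ 4 * P s = 0) by lra.
        destruct (Rmult_integral _ _ H4) as [H5|H5]; auto.
        exfalso. exact (pow_nonzero _ 4 Z H5). }
      rewrite H1. lra. }
  assert (Hlamneg : lam < 0).
  { assert (lam <= 0).
    { rewrite (HEpt 0). assert (0 <= sg 0 ^ 4) by (replace (sg 0 ^ 4) with ((sg 0 ^ 2) ^ 2) by ring; apply pow2_ge_0).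
      specialize (HP 0). nra. }
    lra. }
  assert (Hnz : forall s, sg s <> 0).
  { intros s Z. apply Hlam0. rewrite (HEpt s), Z. ring. }
  assert (Hex : exists s, 0 < sg s).
  { destruct (classic (exists s, 0 < sg s)) as [H|H]; auto. exfalso.
    apply (no_increase G (fun s => 1 + D s) HGper HdG).
    intros s. rewrite Hb. assert (sg s <= 0).
    { destruct (Rlt_le_dec 0 (sg s)); auto. exfalso; apply H; exists s; auto. }
    specialize (HP s). nra. }
  assert (Hcont : continuity sg) by (intros x; apply (D_cont (Hs x))).
  assert (Hpos : forall s, 0 < sg s).
  { intros s. destruct Hex as [s2 Hs2].
    destruct (Rlt_le_dec 0 (sg s)) as [Hl|Hl]; auto. exfalso.
    assert (Hl' : sg s < 0) by (specialize (Hnz s); lra).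
    destruct (Rlt_le_dec s s2) as [Hss|Hss].
    - destruct (IVT sg s s2 Hcont Hss Hl' Hs2) as [z [_ Hz]]. exact (Hnz z Hz).
    - destruct (Rle_lt_or_eq_dec _ _ Hss) as [Hss'|Hss']; [|subst; lra].
      destruct (IVT (fun t => - sg t) s2 s) as [z [_ Hz]].
      + apply continuity_opp, Hcont.
      + exact Hss'.
      + lra.
      + lra.
      + apply (Hnz z). lra. }
  set (f := fun t => / 3 * (sg t * G t + k / 2 * t)).
  assert (Hf : forall s, is_derive f s (sg s)).
  { intros s. eapply D_eq.
    apply (D_scal (/3) (D_plus (D_mult (Hs s) (HdG s)) (D_scal (k/2) (D_id s)))).
    rewrite Ha, Hb, <- (Hk s), Hc. field. }
  assert (Hint : RInt sg 0 1 = k / 6).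
  { apply is_RInt_unique.
    assert (H := is_RInt_derive f sg 0 1 (fun x _ => Hf x)
                   (fun x _ => ex_derive_continuous sg x (proj1 hsg_C1 x))).
    assert (e1 : sg 1 = sg 0) by (rewrite <- (hsg_per 0); f_equal; ring).
    assert (e2 : G 1 = G 0) by (rewrite <- (HGper 0); f_equal; ring).
    assert (Hm : minus (f 1) (f 0) = k / 6).
    { unfold minus, plus, opp; simpl. unfold f. rewrite e1, e2. field. }
    rewrite <- Hm. exact H. }
  assert (Htb : taubar = k / 6).
  { unfold taubar. rewrite <- Hint. apply RInt_ext. intros x _. unfold tau.
    apply sqrt_pow2. left; apply Hpos. }
  assert (Dtau : forall s, is_derive tau s (2 * sg s * sp s)) by (intros s; apply (D_sq (Hs s))).
  assert (Hfi : forall s, / 2 * Derive tau s ^ 2 + Vpot taubar (tau s) = lam).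
  { intros s. rewrite (is_derive_unique _ _ _ (Dtau s)). unfold Vpot, pow3half, tau.
    rewrite sqrt_pow2 by (left; apply Hpos). rewrite Htb, Ha. unfold lam. rewrite <- (HE s).
    unfold E. field. }
  exists lam. split; [exact Hfi|]. split.
  { intros s0 [eps [Heps Hm]].
    assert (Hd0 : 2 * sg s0 * sp s0 = 0).
    { assert (pr : derivable_pt tau s0).
      { exists (2 * sg s0 * sp s0). apply (proj1 (is_derive_Reals _ _ _) (Dtau s0)). }
      assert (Hpr : derive_pt tau s0 pr = 2 * sg s0 * sp s0).
      { apply derive_pt_eq_0. apply (proj1 (is_derive_Reals _ _ _) (Dtau s0)). }
      rewrite <- Hpr. destruct Hm as [Hmax|Hmin].
      - apply (deriv_maximum tau (s0 - eps) (s0 + eps) s0 pr); try lra.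
        intros x h1 h2; apply Hmax. apply Rabs_def1; lra.
      - apply (deriv_minimum tau (s0 - eps) (s0 + eps) s0 pr); try lra.
        intros x h1 h2; apply Hmin. apply Rabs_def1; lra. }
    rewrite <- (Hfi s0), (is_derive_unique _ _ _ (Dtau s0)), Hd0. ring. }
  split; [|exact Hlamneg].
  rewrite <- (Hfi 0). set (DD := Derive tau 0). unfold Vpot, pow3half, tau.
  rewrite sqrt_pow2 by (left; apply Hpos).
  assert (HF0 : 0 <= F 0) by (apply sum_nonneg; intros; apply pow2_ge_0).
  assert (Ht : 0 <= taubar) by (rewrite Htb; specialize (Hk 0); specialize (Hpos 0); lra).
  assert (Hσ := Hpos 0).
  assert (H1 : 0 <= (sg 0 - taubar) ^ 2 * (2 * sg 0 + taubar))
    by (apply Rmult_le_pos; [apply pow2_ge_0 | lra]).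
  assert (H2 : 0 <= DD ^ 2) by apply pow2_ge_0.
  assert (H3 : 4 * (sg 0 ^ 2 * sg 0) - 6 * taubar * sg 0 ^ 2 + 2 * taubar ^ 3
               = 2 * ((sg 0 - taubar) ^ 2 * (2 * sg 0 + taubar))) by ring.
  lra.
Qed.
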